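(* Let $\mathcal{A}$ be an abelian group with $|\mathcal{A}|\ge 3$ and let $G$ be a generalized sun graph. Then $G$ is $\mathcal{A}$-vertex magic if and only if every non-pendant vertex of $G$ is a support vertex. Further, if every non-pendant vertex of $G$ is a support vertex of odd degree, then $G$ is group vertex magic.
   Context: Graphs are finite, simple, undirected. A unicyclic graph is a connected graph with exactly one cycle. A generalized sun is a unicyclic graph $G=(V,E)$ whose unique cycle $C_k$ satisfies $k<|V|$ and such that every vertex not on $C_k$ is pendant (has degree $1$). A support vertex is a vertex adjacent to a pendant vertex. For an additive abelian group $\mathcal{A}$ with identity $0$, a map $\ell:V\to\mathcal{A}\setminus\{0\}$ is an $\mathcal{A}$-vertex magic labeling if there is $\mu\in\mathcal{A}$ with $\sum_{u\in N(v)}\ell(u)=\mu$ for all $v\in V$; $G$ is $\mathcal{A}$-vertex magic if such a labeling exists, and group vertex magic if it is $\mathcal{A}$-vertex magic for every nontrivial abelian group $\mathcal{A}$. *)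

(* Defs.v *)
From HB Require Import structures.
From mathcomp Require Import all_boot all_order all_algebra.
Set Implicit Arguments. Unset Strict Implicit. Unset Printing Implicit Defensive.
Import GRing.Theory.

(* A finite simple undirected graph is given by a vertex type T : finType and
   an adjacency relation e : rel T, assumed symmetric and irreflexive
   (these are explicit hypotheses of the theorem). *)

Section Graphs.
Variable T : finType.
Variable e : rel T.

Definition nbhd (v : T) : {set T} := [set u | e v u].
Definition deg (v : T) : nat := #|nbhd v|.

Definition pendant (v : T) : bool := deg v == 1.
Definition support_vertex (v : T) : bool := [exists u, e v u && pendant u].

Definition connected_graph : Prop := forall x y : T, connect e x y.

Definition is_cycle (c : seq T) : bool :=
  [&& uniq c, 3 <= size c & cycle e c].

(* The edge set of the cycle subgraph (both orientations of each edge);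
   two vertex sequences describe the same cycle iff these sets agree. *)
Definition cycle_edges (c : seq T) : {set T * T} :=
  [set p | ((p.1 \in c) && (p.2 == next c p.1))
           || ((p.2 \in c) && (p.1 == next c p.2))].

Definition unique_cycle (c : seq T) : Prop :=
  is_cycle c /\ forall c', is_cycle c' -> cycle_edges c' = cycle_edges c.

Definition unicyclic : Prop := connected_graph /\ exists c, unique_cycle c.

Definition gen_sun : Prop :=
  connected_graph /\
  exists c, [/\ unique_cycle c, size c < #|T| &
                forall v, v \notin c -> pendant v].

Definition vertex_magic_labeling (A : zmodType) (l : T -> A) : Prop :=
  (forall v, l v != 0%R) /\
  exists mu : A, forall v, (\sum_(u in nbhd v) l u)%R = mu.

Definition vertex_magic (A : zmodType) : Prop :=
  exists l : T -> A, vertex_magic_labeling l.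

Definition group_vertex_magic : Prop :=
  forall A : zmodType, (exists a : A, a != 0%R) -> vertex_magic A.

End Graphs.

(* Main.v *)
Require Import Defs.
From mathcomp Require Import all_boot all_order all_algebra.
Set Implicit Arguments. Unset Strict Implicit. Unset Printing Implicit Defensive.

Lemma prev_at_last (T : eqType) (x y : T) p : x \notin p -> prev_at x x y p = last y p.
Proof.
elim: p y => [|y' p IH] y /=; first by rewrite eqxx.
rewrite inE negb_or => /andP[/negbTE -> /IH]; exact.
Qed.

Lemma prev_head (T : eqType) (x : T) p : x \notin p -> prev (x :: p) x = last x p.
Proof. by move=> hx; rewrite /prev prev_at_last. Qed.

Lemma cyc_next_prev (T : eqType) (c : seq T) x : uniq c -> 3 <= size c -> x \in c ->
  next c x != prev c x.
Proof.
move=> uc sc /rot_to [i s hs].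
rewrite -(next_rot i uc) -(prev_rot i uc) hs.
have : uniq (x :: s) by rewrite -hs rot_uniq.
have : 3 <= size (x :: s) by rewrite -hs size_rot.
case: s {hs} => [|y [|z s]] //= _.
rewrite !inE !negb_or => /and4P[/and3P[xy xz xs] /andP[yz ys] _ _].
rewrite eqxx (negbTE xy) (negbTE xz) prev_at_last //.
apply/eqP=> h; move: (mem_last z s); rewrite -h inE (negbTE ys) orbF.
by rewrite (negbTE yz).
Qed.

Lemma no_chord (T : finType) (e : rel T) (e_sym : symmetric e) (e_irr : irreflexive e) c
  (hc : unique_cycle e c) v u :
  v \in c -> e v u -> u \in c -> u != next c v -> u != prev c v -> False.
Proof.
case: hc => /and3P[uc sc cyc] huniq vc evu uin hn hp.
have uv : u != v by apply/eqP=> h; move: evu; rewrite h e_irr.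
case/rot_to: (vc) => i s hs.
have us : u \in s.
  by move: uin; rewrite -(mem_rot i) hs inE (negbTE uv).
have uc0 : uniq (v :: s) by rewrite -hs rot_uniq.
have cyc0 : cycle e (v :: s) by rewrite -hs rot_cycle.
have hn0 : u != next (v :: s) v by rewrite -hs (next_rot i uc).
case/splitPr: us uc0 cyc0 hn0 => s1 s2 uc0 cyc0 hn0.
case: s1 uc0 cyc0 hn0 => [|a s1] uc0 cyc0 hn0.
  by move: hn0; rewrite /next /= eqxx eqxx.
set c' := v :: rcons (a :: s1) u.
have ec : c' ++ s2 = v :: (a :: s1) ++ u :: s2 by rewrite /c' /= cat_rcons.
have uc' : uniq c' by move: uc0; rewrite -ec cat_uniq => /andP[].
have cyc' : cycle e c'.
  rewrite /c' /= rcons_path last_rcons (e_sym u v) evu andbT.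
  by move: cyc0; rewrite /= -cat_rcons rcons_cat cat_path => /andP[-> /andP[-> _]].
have ic' : is_cycle e c' by rewrite /is_cycle uc' cyc' /c' /= size_rcons.
have hce := huniq _ ic'.
have : (u, v) \in cycle_edges c'.
  rewrite inE; apply/orP; left; apply/andP; split.
    by rewrite /= /c' inE mem_rcons inE eqxx orbT.
  change (v == next c' u).
  have vn : v \notin rcons (a :: s1) u by move: uc'; rewrite /c' /= => /andP[].
  have pv : prev c' v = u by rewrite /c' prev_head // last_rcons.
  by rewrite -{1}pv next_prev.
rewrite hce inE. change ((u \in c) && (v == next c u) || (v \in c) && (u == next c v) -> False).

move=> /orP[/andP[_ /eqP h]|/andP[_ /eqP h]].
  by move: hp; rewrite h prev_next // eqxx.
by move: hn; rewrite h eqxx.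
Qed.

Lemma nbhd1 (T : finType) (e : rel T) w u : pendant e w -> e w u -> nbhd e w = [set u].
Proof.
move=> /cards1P [x hx] ewu.
have : u \in nbhd e w by rewrite inE.
by rewrite hx inE => /eqP <-.
Qed.

Lemma cyc_np (T : finType) (e : rel T) (e_sym : symmetric e) c x :
  is_cycle e c -> x \in c -> ~~ pendant e x.
Proof.
move=> /and3P[uc sc cyc] xc.
have hs : [set next c x; prev c x] \subset nbhd e x.
  apply/subsetP => y; rewrite !inE => /orP[/eqP->|/eqP->].
    exact: next_cycle.
  by rewrite e_sym; apply: prev_cycle.
have := subset_leq_card hs; rewrite cards2 cyc_next_prev //.
by rewrite /pendant /deg => h; apply/eqP => h1; rewrite h1 in h.
Qed.

Lemma np_in (T : finType) (e : rel T) (c : seq T) (hoff : forall v, v \notin c -> pendant e v) v :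
  ~~ pendant e v -> v \in c.
Proof. by apply: contraR; apply: hoff. Qed.

Lemma G1 (T : finType) (e : rel T) (e_sym : symmetric e) c (hc : unique_cycle e c)
  (hconn : connected_graph e) w u : pendant e w -> e w u -> ~~ pendant e u.
Proof.
move=> pw ewu; apply/negP => pu.
have nw := nbhd1 pw ewu.
have nu : nbhd e u = [set w] by apply: nbhd1 => //; rewrite e_sym.
case: hc => ic _.
have [x xc] : exists x, x \in c.
  by case/and3P: ic; case: c => [|x c'] //= _ _ _; exists x; rewrite inE eqxx.
have := cyc_np e_sym ic xc.
have : forall (p : seq T) (y : T), y \in [set w; u] -> path e y p -> last y p \in [set w; u].
  elim=> [|z p IH] y //= hy /andP[eyz hp]; apply: IH hp.
  move: hy; rewrite !inE => /orP[/eqP hy|/eqP hy].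
    have : z \in nbhd e w by rewrite inE -hy.
    by rewrite nw inE => ->; rewrite orbT.
  have : z \in nbhd e u by rewrite inE -hy.
  by rewrite nu inE => ->.
move=> hcl.
have /connectP [p hp ->] := hconn w x.
have := hcl p w; rewrite !inE eqxx => /(_ isT hp) /orP[/eqP->|/eqP->].
  by rewrite pw.
by rewrite pu.
Qed.

Lemma G2 (T : finType) (e : rel T) (e_sym : symmetric e) (e_irr : irreflexive e) c
  (hc : unique_cycle e c) (hoff : forall v, v \notin c -> pendant e v) v :
  ~~ pendant e v -> [set u | e v u && ~~ pendant e u] = [set next c v; prev c v].
Proof.
move=> npv; have vc := np_in hoff npv.
have ic := hc.1.
apply/setP => u; rewrite !inE.
apply/andP/orP => [[evu npu]|[/eqP->|/eqP->]].
  have uc := np_in hoff npu.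
  case: (boolP (u == next c v)) => [h|hn]; first by left.
  case: (boolP (u == prev c v)) => [h|hp]; first by right.
  by case: (no_chord e_sym e_irr hc vc evu uc hn hp).
  split; first by case/and3P: ic => _ _ cyc; apply: next_cycle.
  by apply: (cyc_np e_sym ic); rewrite mem_next.
split; first by case/and3P: ic => _ _ cyc; rewrite e_sym; apply: prev_cycle.
by apply: (cyc_np e_sym ic); rewrite mem_prev.
Qed.

Lemma G2card (T : finType) (e : rel T) (e_sym : symmetric e) (e_irr : irreflexive e) c
  (hc : unique_cycle e c) (hoff : forall v, v \notin c -> pendant e v) v :
  ~~ pendant e v -> #|[set u | e v u && ~~ pendant e u]| = 2.
Proof.
move=> npv; rewrite (G2 e_sym e_irr hc hoff npv) cards2.
case/and3P: hc.1 => uc sc _.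
by rewrite cyc_next_prev // (np_in hoff npv).
Qed.

Lemma G0 (T : finType) (e : rel T) (c : seq T) (hoff : forall v, v \notin c -> pendant e v)
  (hsz : size c < #|T|) : exists w, pendant e w.
Proof.
case: (pickP [predC c]) => [w /= hw|h]; first by exists w; apply: hoff.
have : #|T| <= size c.
  apply: leq_trans (card_size c).
  apply: subset_leq_card; apply/subsetP => x _.
  by move: (h x) => /= /negbFE.
by rewrite leqNgt hsz.
Qed.

Import GRing.Theory.
Local Open Scope ring_scope.

Lemma ext_lab (T : finType) (A : zmodType) (S : {set T}) x (s t : A) :
  x \in S -> s != 0 ->
  (exists f : {ffun T -> A}, (forall y, y \in S :\ x -> f y != 0) /\
      \sum_(y in S :\ x) f y = t - s) ->
  exists f : {ffun T -> A}, (forall y, y \in S -> f y != 0) /\ \sum_(y in S) f y = t.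
Proof.
move=> xS s0 [f [hf hs]].
exists [ffun y => if y == x then s else f y]; split.
  move=> y yS; rewrite ffunE; case: (boolP (y == x)) => yx; first exact: s0.
  by apply: hf; rewrite !inE yx.
rewrite (bigD1 x) //= ffunE eqxx.
rewrite (eq_bigr f); last by move=> y /andP[_ yx]; rewrite ffunE (negbTE yx).
rewrite (eq_bigl (fun y => y \in S :\ x)); last by move=> y; rewrite !inE andbC.
by rewrite hs addrC subrK.
Qed.

Lemma odd_lab (T : finType) (A : zmodType) n : forall (S : {set T}), #|S| = n -> odd n ->
  forall t : A, t != 0 ->
  exists f : {ffun T -> A}, (forall y, y \in S -> f y != 0) /\ \sum_(y in S) f y = t.
Proof.
elim/ltn_ind: n => n IH S hS hodd t t0.
have : (0 < #|S|)%N by rewrite hS; case: n hodd {IH hS}.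
case/card_gt0P => x xS.
have hS1 : #|S :\ x| = n.-1 by rewrite (cardsD1 x S) xS in hS; rewrite -hS.
case: (posnP n.-1) => hn.
  exists [ffun => t]; split => [y _|]; first by rewrite ffunE.
  have /cards1P [z hz] : #|S| == 1%N by rewrite hS; case: n {IH hS hS1} hn hodd => [|[|]].
  rewrite hz big_set1 ffunE //.
apply: (ext_lab xS t0).
have : (0 < #|S :\ x|)%N by rewrite hS1 lt0n; apply/eqP => h; rewrite h in hn.
case/card_gt0P => y yS.
have nt0 : - t != 0 by rewrite oppr_eq0.
apply: (ext_lab yS nt0).
have -> : t - t - - t = t by rewrite subrr sub0r opprK.
apply: (IH n.-2) => //.
- by case: n {IH hS hS1} hodd hn => [|[|n]].
- by have := cardsD1 y (S :\ x); rewrite yS hS1 => ->; rewrite add1n.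
- by case: n {IH hS hS1} hodd hn => [|[|n]] //=; rewrite negbK.
Qed.

Lemma gen_lab (T : finType) (A : zmodType)
  (hA : exists a b c : A, [/\ a != b, b != c & a != c]) (S : {set T}) (t : A) :
  (0 < #|S|)%N -> t != 0 ->
  exists f : {ffun T -> A}, (forall y, y \in S -> f y != 0) /\ \sum_(y in S) f y = t.
Proof.
move=> hS t0.
case: (boolP (odd #|S|)) => ho; first exact: (odd_lab erefl ho t0).
have [b [b0 bt]] : exists b : A, b != 0 /\ b != t.
  case: hA => a [b [c [ab bc ac]]].
  case: (boolP (a == 0)) => [/eqP a0|a0].
    case: (boolP (b == t)) => [/eqP bt|bt].
      by exists c; split; [rewrite -a0 eq_sym | rewrite -bt eq_sym].
    by exists b; split => //; rewrite -a0 eq_sym.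
  case: (boolP (a == t)) => [/eqP at_|at_]; last by exists a.
  case: (boolP (b == 0)) => [/eqP b0|b0].
    by exists c; split; [rewrite -b0 eq_sym | rewrite -at_ eq_sym].
  by exists b; split => //; rewrite -at_ eq_sym.
case/card_gt0P: hS => x xS.
apply: (ext_lab xS b0).
apply: (odd_lab erefl) => //.
  by move: ho; rewrite (cardsD1 x S) xS add1n /=; rewrite negbK.
by rewrite subr_eq0 eq_sym.
Qed.

Definition pnb (T : finType) (e : rel T) v := [set u | e v u && pendant e u].

Lemma construct (T : finType) (e : rel T) (e_sym : symmetric e) (e_irr : irreflexive e)
  c (hc : unique_cycle e c) (hoff : forall v, v \notin c -> pendant e v)
  (hconn : connected_graph e) (A : zmodType) (a : A) (a0 : a != 0)
  (hsupp : forall v, ~~ pendant e v -> exists f : {ffun T -> A},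
       (forall u, u \in pnb e v -> f u != 0) /\ \sum_(u in pnb e v) f u = - a) :
  vertex_magic e A.
Proof.
have : forall v, exists f : {ffun T -> A}, ~~ pendant e v ->
       (forall u, u \in pnb e v -> f u != 0) /\ \sum_(u in pnb e v) f u = - a.
  move=> v; case: (boolP (pendant e v)) => pv.
    by exists [ffun => 0].
  by have [f hf] := hsupp v pv; exists f.
case/fin_all_exists => F hF.
pose l w := if pendant e w then \sum_(u in nbhd e w) F u w else a.
have pend_nb : forall w, pendant e w -> exists u, e w u.
  move=> w /cards1P [u hu]; exists u.
  have : u \in nbhd e w by rewrite hu inE.
  by rewrite inE.
exists l; split.
  move=> w; rewrite /l; case: ifP => pw //.
  have [u ewu] := pend_nb w pw.
  rewrite (nbhd1 pw ewu) big_set1.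
  have npu := G1 e_sym hc hconn pw ewu.
  by apply: (hF u npu).1; rewrite inE (e_sym u w) ewu pw.
exists a => v.
case: (boolP (pendant e v)) => pv.
  have [u evu] := pend_nb v pv.
  rewrite (nbhd1 pv evu) big_set1 /l.
  by rewrite (negbTE (G1 e_sym hc hconn pv evu)).
rewrite (bigID (pendant e)) /=.
rewrite (eq_big (fun u => u \in pnb e v) (F v)); first last.
- move=> u /andP[]; rewrite inE => evu pu.
  by rewrite /l pu (nbhd1 pu (_ : e u v)) ?big_set1 // e_sym.
- by move=> u; rewrite !inE.
rewrite (hF v pv).2.
rewrite (eq_big (fun u => u \in [set u | e v u && ~~ pendant e u]) (fun _ => a)); first last.
- by move=> u /andP[]; rewrite inE => _ /negbTE; rewrite /l => ->.
- by move=> u; rewrite !inE.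
by rewrite sumr_const (G2card e_sym e_irr hc hoff pv) mulr2n addKr.
Qed.

Lemma pend_nb (T : finType) (e : rel T) w : pendant e w -> exists u, e w u.
Proof.
move=> /cards1P [u hu]; exists u.
have : u \in nbhd e w by rewrite hu inE.
by rewrite inE.
Qed.

Lemma deg_split (T : finType) (e : rel T) (e_sym : symmetric e) (e_irr : irreflexive e)
  c (hc : unique_cycle e c) (hoff : forall v, v \notin c -> pendant e v) v :
  ~~ pendant e v -> deg e v = (#|pnb e v| + 2)%N.
Proof.
move=> npv; rewrite /deg -(cardsID (pnb e v) (nbhd e v)).
rewrite -(G2card e_sym e_irr hc hoff npv); congr addn; apply: eq_card => x.
  by rewrite !inE; case: (e v x).
by rewrite !inE; case: (e v x); rewrite ?andbF ?andbT.
Qed.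

Theorem lemma2p5 (T : finType) (e : rel T)
  (e_sym : symmetric e) (e_irr : irreflexive e)
  (A : zmodType) (hA : exists a b c : A, [/\ a != b, b != c & a != c])
  (hG : gen_sun e) :
  (vertex_magic e A <-> (forall v, ~~ pendant e v -> support_vertex e v)) /\
  ((forall v, ~~ pendant e v -> support_vertex e v && odd (deg e v)) ->
     group_vertex_magic e).
Proof.
case: hG => hconn [c [hc hsz hoff]].
split; [split|].
- move=> [l [l0 [mu hmu]]] v npv; apply: contraT => nsv.
  pose B y := ~~ pendant e y && ~~ support_vertex e y.
  have hpath : forall (p : seq T) y, ~~ B y -> path e y p -> B (last y p) ->
      exists z y', [/\ e z y', ~~ B z & B y'].
    elim => [|z p IH] y /= hy; first by rewrite (negbTE hy).
    case/andP => eyz hp hl; case: (boolP (B z)) => bz; first by exists y, z.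
    exact: IH hp hl.
  have [w pw] := G0 hoff hsz.
  have [u ewu] := pend_nb pw.
  have su : support_vertex e u.
    by apply/existsP; exists w; rewrite (e_sym u w) ewu pw.
  have nbu : ~~ B u by rewrite /B su andbF.
  have /connectP [p hp hlast] := hconn u v.
  have hb : B (last u p) by rewrite -hlast /B npv nsv.
  have [z [y [ezy nbz by_]]] := hpath p u nbu hp hb.
  case/andP: by_ => npy nsy.
  have npz : ~~ pendant e z.
    apply/negP => pz; move/negP: nsy; apply; apply/existsP; exists z.
    by rewrite e_sym ezy pz.
  have sz : support_vertex e z by move: nbz; rewrite /B npz /= negbK.
  have lz : l z = mu.
    case/existsP: sz => w' /andP[ezw pw'].
    by have := hmu w'; rewrite (nbhd1 pw' (_ : e w' z)) ?big_set1 // e_sym.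
  have hN : nbhd e y = [set u | e y u && ~~ pendant e u].
    apply/setP => x; rewrite !inE; case: (boolP (e y x)) => //= eyx.
    apply/esym/negP => px; move/negP: nsy; apply; apply/existsP; exists x.
    by rewrite eyx px.
  have zN : z \in nbhd e y by rewrite inE e_sym.
  have h2 : #|nbhd e y| = 2%N by rewrite hN (G2card e_sym e_irr hc hoff npy).
  have := cardsD1 z (nbhd e y); rewrite zN h2 add1n => /eqP; rewrite eqSS eq_sym.
  case/cards1P => z' hz'.
  have := hmu y; rewrite (bigD1 z) //= lz.
  rewrite (eq_bigl (fun i => i \in nbhd e y :\ z)); last by move=> i; rewrite !inE andbC.
  rewrite hz' big_set1 => h.
  have : l z' = 0 by apply: (addrI mu); rewrite addr0.
  by move/eqP; rewrite (negbTE (l0 z')).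
- move=> hs.
  have [a a0] : exists a : A, a != 0.
    case: hA => a [b [c' [ab _ _]]].
    case: (boolP (a == 0)) => [/eqP a0|a0]; last by exists a.
    by exists b; rewrite -a0 eq_sym.
  apply: (construct e_sym e_irr hc hoff hconn a0) => v npv.
  case/existsP: (hs v npv) => u /andP[evu pu].
  apply: gen_lab => //; last by rewrite oppr_eq0.
  by apply/card_gt0P; exists u; rewrite inE evu pu.
- move=> hs A' [a a0].
  apply: (construct e_sym e_irr hc hoff hconn a0) => v npv.
  case/andP: (hs v npv) => _ hodd.
  apply: (odd_lab erefl); last by rewrite oppr_eq0.
  by move: hodd; rewrite (deg_split e_sym e_irr hc hoff npv) addn2 /= negbK.
Qed.
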